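(* Let $\mathbb{K}$ be a field, $m\ge 3$, $R=\mathbb{K}[T_1,\dots,T_m]$, and let $I=\langle T_1^{a_1},\dots,T_m^{a_m},T_1^{b_1}\cdots T_m^{b_m}\rangle\subset R$, where $0\le b_i<a_i$ for all $i$ and $b_i\neq 0$ for at least two indices $i$. Let $L\subset S=R[X_1,\dots,X_m,W]$ be the defining ideal of the Rees algebra of $I$. Then the set $\Gamma_0\cup\Gamma_1$, where $$\Gamma_0=\{\mathcal{P}(X_i,X_j)\mid 1\le j<i\le m+1\},\qquad \Gamma_1=\{\mathcal{P}(W^{|\mathbf{c}|},\mathbf{X}^{\mathbf{c}})\mid \mathbf{0}\neq \mathbf{c}\in\mathbb{N}^m\},$$ is an (infinite) Gröbner basis of $L$ with respect to the monomial order $\tau$.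
   Context: Write $\mathbf{T}^{\mathbf{b}}=T_1^{b_1}\cdots T_m^{b_m}$. Let $\Phi:S\to R[Z]$ be the $R$-algebra homomorphism with $X_i\mapsto T_i^{a_i}Z$ ($1\le i\le m$) and $W\mapsto \mathbf{T}^{\mathbf{b}}Z$; its image is the Rees algebra $\mathcal{R}(I)=\bigoplus_{k\ge0}I^kZ^k$ and $L=\ker\Phi$. Set $X_{m+1}:=W$. For $\mathbf{c}\in\mathbb{N}^m$, $\mathbf{X}^{\mathbf{c}}=X_1^{c_1}\cdots X_m^{c_m}$ and $|\mathbf{c}|=\sum c_i$. Let $\Psi:S\to R$ be the $R$-algebra map with $X_i\mapsto T_i^{a_i}$, $W\mapsto\mathbf{T}^{\mathbf{b}}$. For monomials $M,N$ in $X_1,\dots,X_m,W$ (of the same degree), put $g=\gcd(\Psi(M),\Psi(N))$ and $\mathcal{P}(M,N):=\frac{\Psi(N)}{g}M-\frac{\Psi(M)}{g}N\in L$. The order $\tau$ is the lexicographic order on $S$ with $W>X_m>X_{m-1}>\cdots>X_1>T_1>\cdots>T_m$. *)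

(* Defs.v *)
From HB Require Import structures.
From mathcomp Require Import all_boot all_order all_algebra.
From mathcomp Require Import mpoly.
Set Implicit Arguments. Unset Strict Implicit. Unset Printing Implicit Defensive.
Import GRing.Theory.
Local Open Scope ring_scope.

(* Variables of S = K[T_1..T_m, X_1..X_m, W] are indexed by 'I_(nS m):
     T_{j+1} |-> j        (0 <= j < m)
     X_{j+1} |-> m + j    (0 <= j < m)
     W = X_{m+1} |-> m + m.
   Variables of R[Z] = K[T_1..T_m, Z] are indexed by 'I_(m.+1):
     T_{j+1} |-> j, Z |-> m. *)
Definition nS (m : nat) : nat := (m + m).+1.

Definition ext (m : nat) (a : 'I_m -> nat) (k : nat) : nat :=
  match @insub nat (fun k => k < m)%N _ k with Some i => a i | None => 0%N end.

Section Defs.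
Variables (K : fieldType) (m : nat) (a b : 'I_m -> nat).

Definition phi_img (k : nat) : {mpoly K[m.+1]} :=
  if (k < m)%N then 'X_(inord k)
  else if (k < m + m)%N then 'X_(inord (k - m)) ^+ ext a (k - m) * 'X_(inord m)
  else (\prod_(j < m) 'X_(inord j) ^+ b j) * 'X_(inord m).

Definition Phi (f : {mpoly K[nS m]}) : {mpoly K[m.+1]} :=
  comp_mpoly [tuple phi_img i | i < nS m] f.

Definition Lker (f : {mpoly K[nS m]}) : Prop := Phi f = 0.

(* Psi : S -> R, on monomials: T_j |-> T_j, X_j |-> T_j^{a_j}, W |-> T^b.
   The result is a monomial in the T-variables, viewed in 'X_{1..nS m}. *)
Definition psi_mon (mu : 'X_{1..nS m}) : 'X_{1..nS m} :=
  [multinom (if (i < m)%N then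
               mu (inord i) + ext a i * mu (inord (m + i)) + ext b i * mu (inord (m + m))
             else 0)%N | i < nS m].

Definition gcd_mon (u v : 'X_{1..nS m}) : 'X_{1..nS m} :=
  [multinom minn (u i) (v i) | i < nS m].

Definition Pbin (M N : 'X_{1..nS m}) : {mpoly K[nS m]} :=
  let g := gcd_mon (psi_mon M) (psi_mon N) in
  'X_[(psi_mon N - g)%MM] * 'X_[M] - 'X_[(psi_mon M - g)%MM] * 'X_[N].

(* monomial in X_1..X_{m+1} (X_{m+1} = W) with exponent e k on X_{k+1} *)
Definition xw_mon (e : nat -> nat) : 'X_{1..nS m} :=
  [multinom (if (m <= i)%N then e (i - m) else 0)%N | i < nS m].

Definition Xvar (i : nat) : 'X_{1..nS m} := xw_mon (fun k => (k == i.-1) : nat).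
Definition Xpow (c : 'I_m -> nat) : 'X_{1..nS m} := xw_mon (ext c).
Definition Wpow (d : nat) : 'X_{1..nS m} := xw_mon (fun k => ((k == m) : nat) * d)%N.

Definition Gamma0 (g : {mpoly K[nS m]}) : Prop :=
  exists i j : nat, [/\ (1 <= j)%N, (j < i)%N, (i <= m.+1)%N & g = Pbin (Xvar i) (Xvar j)].

Definition Gamma1 (g : {mpoly K[nS m]}) : Prop :=
  exists c : 'I_m -> nat, (exists i, c i != 0%N) /\
    g = Pbin (Wpow (\sum_(i < m) c i)%N) (Xpow c).

(* the order tau: lex with W > X_m > ... > X_1 > T_1 > ... > T_m *)
Definition tau_seq : seq nat :=
  (m + m)%N :: [seq ((m + m).-1 - j)%N | j <- iota 0 m] ++ iota 0 m.

Definition tau_lt (u v : 'X_{1..nS m}) : Prop :=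
  exists k, [/\ (k < size tau_seq)%N,
    (forall j, (j < k)%N -> u (inord (nth 0 tau_seq j)) = v (inord (nth 0 tau_seq j)))
    & (u (inord (nth 0 tau_seq k)) < v (inord (nth 0 tau_seq k)))%N].

End Defs.

Definition is_lead_mon (R : ringType) (n : nat) (lt : 'X_{1..n} -> 'X_{1..n} -> Prop)
  (p : {mpoly R[n]}) (mu : 'X_{1..n}) : Prop :=
  mu \in msupp p /\ forall nu, nu \in msupp p -> nu <> mu -> lt nu mu.

(* G is a (possibly infinite) Groebner basis of the ideal I w.r.t. lt:
   G is contained in I and in(I) is generated by the leading monomials of G,
   i.e. the leading monomial of every nonzero f in I is divisible by the
   leading monomial of some nonzero g in G. *)
Definition is_groebner (R : ringType) (n : nat) (lt : 'X_{1..n} -> 'X_{1..n} -> Prop)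
  (G I : {mpoly R[n]} -> Prop) : Prop :=
  (forall g, G g -> I g) /\
  (forall f, I f -> f <> 0 -> exists g mu nu,
     [/\ G g, g <> 0, is_lead_mon lt g nu, is_lead_mon lt f mu & (nu <= mu)%MM]).

(* Main.v *)
Require Import Defs.
From HB Require Import structures.
From mathcomp Require Import all_boot all_order all_algebra.
From mathcomp Require Import mpoly.
From mathcomp Require Import zify.
Set Implicit Arguments. Unset Strict Implicit. Unset Printing Implicit Defensive.
Import GRing.Theory.
Local Open Scope ring_scope.

Section Tau.
Variable m : nat.

Lemma size_tau : size (tau_seq m) = (m + m).+1.
Proof. by rewrite /tau_seq /= size_cat size_map !size_iota. Qed.

Lemma nth_tau k : (k < (m + m).+1)%N ->
  nth 0%N (tau_seq m) k =
  if k == 0%N then (m + m)%N else if (k <= m)%N then (m + m - k)%N else (k - m - 1)%N.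
Proof.
case: k => [|k] //= hk.
rewrite nth_cat size_map size_iota.
case: ifP => hkm.
  rewrite (nth_map 0%N) ?size_iota // nth_iota //. lia.
rewrite nth_iota; last by lia.
lia.
Qed.

Definition key (u : 'X_{1..nS m}) k := u (inord (nth 0%N (tau_seq m) k)).

Definition lexlt n (F G : nat -> nat) :=
  exists k, [/\ (k < n)%N, (forall j, (j < k)%N -> F j = G j) & (F k < G k)%N].

Lemma tau_ltE (u v : 'X_{1..nS m}) : tau_lt u v <-> lexlt (m + m).+1 (key u) (key v).
Proof. by rewrite /tau_lt size_tau. Qed.

Lemma lexlt_irr n F : ~ lexlt n F F.
Proof. by move=> [k [_ _]]; rewrite ltnn. Qed.

Lemma lexlt_trans n F G H : lexlt n F G -> lexlt n G H -> lexlt n F H.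
Proof.
move=> [k1 [h1 e1 l1]] [k2 [h2 e2 l2]].
case: (ltngtP k1 k2) => hk.
- exists k1; split => //; first by move=> j hj; rewrite e1 // e2 //; lia.
  by rewrite -(e2 k1 hk).
- exists k2; split => //; first by move=> j hj; rewrite e1 ?e2 //; lia.
  by rewrite (e1 k2 hk).
- subst k2; exists k1; split => //; first by move=> j hj; rewrite e1 ?e2.
  exact: ltn_trans l1 l2.
Qed.

Lemma lexlt_total n F G :
  (forall k, (k < n)%N -> F k = G k) \/ lexlt n F G \/ lexlt n G F.
Proof.
elim: n => [|n IH]; first by left.
case: IH => [E|[[k [h1 h2 h3]]|[k [h1 h2 h3]]]]; last 2 first.
- by right; left; exists k; split => //; lia.
- by right; right; exists k; split => //; lia.
case: (ltngtP (F n) (G n)) => h.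
- right; left; exists n; split => //.
- right; right; exists n; split => // j hj; rewrite E //.
- left; move=> k hk; case: (ltngtP k n) => hkn; [exact: E| lia| by subst].
Qed.

Lemma key_inj (u v : 'X_{1..nS m}) : (forall k, (k < (m + m).+1)%N -> key u k = key v k) -> u = v.
Proof.
move=> E; apply/mnmP => i.
rewrite -(inord_val i); case: i => i hi /=. rewrite /nS in hi.
have [k [hk ->]] : exists k, (k < (m+m).+1)%N /\ i = nth 0%N (tau_seq m) k.
  case: (ltngtP (i) (m + m)) => h.
  - case: (ltnP (i) m) => h2.
    + exists (i + m + 1)%N; rewrite nth_tau; last lia.
      split; first lia. have -> : (i + m + 1 == 0)%N = false by lia.
      have -> : (i + m + 1 <= m)%N = false by lia. lia.
    + exists (m + m - i)%N; rewrite nth_tau; last lia.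
      split; first lia. have -> : (m + m - i == 0)%N = false by lia.
      have -> : (m + m - i <= m)%N by lia. lia.
  - lia.
  - by exists 0%N; rewrite nth_tau.
exact: E.
Qed.

Lemma tau_total (u v : 'X_{1..nS m}) : u <> v -> tau_lt u v \/ tau_lt v u.
Proof.
move=> nuv; rewrite !tau_ltE.
case: (lexlt_total (m + m).+1 (key u) (key v)) => [E|]; last by [].
by case: nuv; apply: key_inj.
Qed.

Lemma tau_trans (u v w : 'X_{1..nS m}) : tau_lt u v -> tau_lt v w -> tau_lt u w.
Proof. rewrite !tau_ltE; exact: lexlt_trans. Qed.

Lemma tau_irr (u : 'X_{1..nS m}) : ~ tau_lt u u.
Proof. rewrite tau_ltE; exact: lexlt_irr. Qed.

Lemma exists_max (s : seq 'X_{1..nS m}) : s <> [::] ->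
  exists2 mu, mu \in s & forall nu, nu \in s -> nu <> mu -> tau_lt nu mu.
Proof.
elim: s => [//|x s IH] _.
case: s IH => [|y s] IH.
  by exists x => [|nu]; rewrite ?mem_seq1 // => /eqP.
case: IH => // mu hmu hmax.
case: (eqVneq x mu) => [exm|hxmu].
  subst x; exists mu; first by rewrite inE eqxx.
  move=> nu; rewrite inE => /orP[/eqP->//|hnu] hne; exact: hmax.
have hne : x <> mu by apply/eqP.
case: (tau_total hne) => h.
- exists mu; first by rewrite inE hmu orbT.
  move=> nu; rewrite inE => /orP[/eqP->//|hnu] hne'; exact: hmax.
- exists x; first by rewrite inE eqxx.
  move=> nu; rewrite inE => /orP[/eqP->//|hnu] hne'.
  case: (eqVneq nu mu) => [->//|hne2].
  apply: (tau_trans _ h); apply: hmax => //; exact/eqP.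
Qed.
End Tau.
Lemma eq_inord n k j : (k < n.+1)%N -> (j < n.+1)%N ->
  (inord k == inord j :> 'I_n.+1) = (k == j).
Proof.
move=> hk hj; apply/eqP/eqP => [e|->//]; by rewrite -(inordK hk) -(inordK hj) e.
Qed.

Lemma sum_pick n (F : nat -> nat) j :
  (\sum_(l < n) ((l == j :> nat) * F l))%N = if (j < n)%N then F j else 0%N.
Proof.
case: ifP => hj.
  rewrite (bigD1 (Ordinal hj)) //= eqxx mul1n big1 ?addn0 // => l hl.
  have -> : (l == j :> nat) = false.
    apply/negbTE; apply: contra hl => /eqP e; apply/eqP/val_inj; by rewrite /= e.
  by rewrite mul0n.
rewrite big1 // => l _; have -> : (l == j :> nat) = false.
  apply/negbTE/eqP => e; have := ltn_ord l; rewrite e hj //.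
by rewrite mul0n.
Qed.

Section PhiSec.
Variables (K : fieldType) (m : nat) (a b : 'I_m -> nat).

Definition cf (u : 'X_{1..nS m}) k := u (inord k).

Lemma extO (f : 'I_m -> nat) (i : 'I_m) : ext f i = f i.
Proof. by rewrite /ext valK. Qed.

Lemma ext_ge (f : 'I_m -> nat) k : (m <= k)%N -> ext f k = 0%N.
Proof. by move=> h; rewrite /ext insubF // ltnNge h. Qed.

Lemma psiE u k : (k < nS m)%N -> psi_mon a b u (inord k) =
  if (k < m)%N then (cf u k + ext a k * cf u (m + k) + ext b k * cf u (m + m))%N else 0%N.
Proof. by move=> hk; rewrite /psi_mon mnmE inordK. Qed.

Definition xdeg (u : 'X_{1..nS m}) := (\sum_(l < m) cf u (m + l) + cf u (m + m))%N.

Definition img k : 'X_{1..m.+1} :=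
  if (k < m)%N then U_(inord k)%MM
  else if (k < m + m)%N then (U_(inord (k - m)) *+ ext a (k - m) + U_(inord m))%MM
  else (\big[+%MM/0%MM]_(j < m) (U_(inord j) *+ b j) + U_(inord m))%MM.

Lemma phi_imgE k : phi_img K a b k = 'X_[img k].
Proof.
rewrite /phi_img /img; case: ifP => // _; case: ifP => _.
  by rewrite mpolyXD mpolyXn.
by rewrite mpolyXD -mprodXnE.
Qed.

Definition phim (u : 'X_{1..nS m}) : 'X_{1..m.+1} :=
  (\big[+%MM/0%MM]_(i < nS m) (img i *+ u i))%MM.

Lemma Phi_X u : Phi (K := K) a b 'X_[u] = 'X_[phim u].
Proof.
rewrite /Phi comp_mpolyX /phim -mprodXnE; apply: eq_bigr => i _.
by rewrite tnth_mktuple phi_imgE.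
Qed.

Lemma imgE k j : (j < m.+1)%N -> img k (inord j) =
  if (k < m)%N then (k == j : nat)
  else if (k < m + m)%N then ((k - m == j) * ext a (k - m) + (m == j))%N
  else ((j < m) * ext b j + (m == j))%N.
Proof.
move=> hj; rewrite /img; case: ifP => hk.
  by rewrite mnm1E eq_inord //; lia.
case: ifP => hk2.
  rewrite mnmDE mulmnE !mnm1E !eq_inord //; lia.
rewrite mnmDE mnm_sumE mnm1E eq_inord //.
congr (_ + _)%N.
rewrite (eq_bigr (fun l : 'I_m => ((l == j :> nat) * ext b l)%N)); last first.
  move=> l _; have hl := ltn_ord l; rewrite mulmnE mnm1E eq_inord //; try lia.
  by rewrite extO.
rewrite sum_pick; case: ifP => // h; by rewrite mul1n.
Qed.

Lemma phimE u j : (j < m.+1)%N ->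
  phim u (inord j) = if (j < m)%N then psi_mon a b u (inord j) else xdeg u.
Proof.
move=> hj; rewrite /phim mnm_sumE.
rewrite (eq_bigr (fun i : 'I_(nS m) => (img i (inord j) * cf u i)%N)); last first.
  by move=> i _; rewrite mulmnE /cf inord_val.
rewrite /nS big_ord_recr big_split_ord /=.
have E1 : (\sum_(i < m) img i (inord j) * cf u i)%N = if (j < m)%N then cf u j else 0%N.
  rewrite -sum_pick; apply: eq_bigr => i _; by rewrite imgE // ltn_ord.
have E2 : (\sum_(i < m) img (m + i) (inord j) * cf u (m + i))%N =
   ((if (j < m)%N then ext a j * cf u (m + j) else 0) + (m == j) * \sum_(i < m) cf u (m + i))%N.
  rewrite -(sum_pick _ (fun i => ext a i * cf u (m + i))%N) big_distrr -big_split /=.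
  apply: eq_bigr => i _; rewrite imgE //= ltnNge leq_addr /= ltn_add2l ltn_ord addKn. lia.
rewrite E1 E2 imgE //.
have -> : (m + m < m)%N = false by lia. rewrite ltnn.
case: ifP => hjm.
  rewrite psiE; last by rewrite /nS; lia.
  rewrite hjm; lia.
have -> : j = m by lia.
rewrite eqxx /xdeg ext_ge //= mul1n add0n; lia.
Qed.

End PhiSec.
Section PbinSec.
Variables (K : fieldType) (m : nat) (a b : 'I_m -> nat).

Definition TA (M N : 'X_{1..nS m}) : 'X_{1..nS m} :=
  (psi_mon a b N - gcd_mon (psi_mon a b M) (psi_mon a b N))%MM.

Lemma PbinE M N : Pbin K a b M N = 'X_[TA M N + M] - 'X_[TA N M + N].
Proof.
rewrite /Pbin /TA !mpolyXD; congr (_ * _ - _ * _); congr 'X_[_].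
apply/mnmP => i; by rewrite !mnmBE !mnmE minnC.
Qed.

Lemma gcdE (u v : 'X_{1..nS m}) i : gcd_mon u v i = minn (u i) (v i).
Proof. exact: mnmE. Qed.

Lemma TAE M N k : (k < nS m)%N -> TA M N (inord k) =
  if (k < m)%N then (psi_mon a b N (inord k) - minn (psi_mon a b M (inord k)) (psi_mon a b N (inord k)))%N
  else 0%N.
Proof.
move=> hk; rewrite /TA mnmBE gcdE.
case: ifP => // h; by rewrite psiE // h.
Qed.

Lemma xdegD (u v : 'X_{1..nS m}) : xdeg (u + v)%MM = (xdeg u + xdeg v)%N.
Proof.
rewrite /xdeg /cf mnmDE.
rewrite (eq_bigr (fun l : 'I_m => u (inord (m + l)) + v (inord (m + l)))%N);
  last by move=> l _; rewrite mnmDE.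
rewrite big_split /=; lia.
Qed.

Lemma xdegTA M N : xdeg (TA M N) = 0%N.
Proof.
rewrite /xdeg /cf big1 => [|l _].
  rewrite TAE; last by rewrite /nS.
  by have -> : (m + m < m)%N = false by lia.
rewrite TAE; last by rewrite /nS; have := ltn_ord l; lia.
by have -> : (m + l < m)%N = false by lia.
Qed.

Lemma PhiB (p q : {mpoly K[nS m]}) : Phi a b (p - q) = Phi a b p - Phi a b q.
Proof. exact: comp_mpolyB. Qed.

Lemma Pbin_ker M N : xdeg M = xdeg N -> Lker a b (Pbin K a b M N).
Proof.
move=> hd; rewrite /Lker PbinE PhiB !Phi_X; apply/eqP; rewrite subr_eq0; apply/eqP.
congr 'X_[_]; apply/mnmP => i; rewrite -(inord_val i); have hi := ltn_ord i.
rewrite !phimE //; case: ifP => hj; last by rewrite !xdegD !xdegTA hd.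
have hjS : (i < nS m)%N by rewrite /nS; lia.
have hmj : (m + i < nS m)%N by rewrite /nS; lia.
have hmm : (m + m < nS m)%N by rewrite /nS; lia.
rewrite !psiE // hj /cf !mnmDE !TAE // hj.
have -> : (m + i < m)%N = false by lia.
have -> : (m + m < m)%N = false by lia.
rewrite !psiE // hj /cf.
lia.
Qed.

Lemma Pbin_lead M N : tau_lt (TA N M + N)%MM (TA M N + M)%MM ->
  Pbin K a b M N <> 0 /\ is_lead_mon (@tau_lt m) (Pbin K a b M N) (TA M N + M)%MM.
Proof.
move=> hlt.
have hne : (TA M N + M)%MM != (TA N M + N)%MM.
  by apply/eqP => e; apply: (tau_irr (u := (TA M N + M)%MM)); rewrite {1}e.
have hc : forall nu, (Pbin K a b M N)@_nu =
    ((TA M N + M)%MM == nu)%:R - ((TA N M + N)%MM == nu)%:R.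
  by move=> nu; rewrite PbinE mcoeffB !mcoeffX.
have hin : (TA M N + M)%MM \in msupp (Pbin K a b M N).
  have hne' : ((TA N M + N)%MM == (TA M N + M)%MM) = false by rewrite eq_sym; exact: negbTE hne.
  by rewrite mcoeff_msupp hc eqxx hne' subr0 oner_neq0.
split.
  by move=> e; move: hin; rewrite e msupp0.
split => // nu; rewrite mcoeff_msupp hc => hnu hne2.
case: (eqVneq (TA N M + N)%MM nu) => [<-//|h2].
have e1 : ((TA M N + M)%MM == nu) = false by apply/eqP => e; apply: hne2; rewrite e.
have e2 : ((TA N M + N)%MM == nu) = false by exact: negbTE h2.
by move: hnu; rewrite e1 e2 subrr eqxx.
Qed.

Lemma ker_pair (f : {mpoly K[nS m]}) mu : Lker a b f -> mu \in msupp f ->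
  exists2 nu, nu \in msupp f & nu != mu /\ phim a b nu = phim a b mu.
Proof.
move=> hf hmu.
case: (boolP (has (fun nu => (nu != mu) && (phim a b nu == phim a b mu)) (msupp f))).
  by case/hasP => nu hnu /andP[h1 /eqP h2]; exists nu.
move=> hn; exfalso.
have : (Phi a b f)@_(phim a b mu) = f@_mu.
  rewrite {1}/Phi comp_mpolyEX raddf_sum /=.
  rewrite (bigD1_seq mu) //= mcoeffZ.
  have hP : forall nu, 'X_[nu] \mPo [tuple phi_img K a b i | i < nS m] = Phi a b 'X_[nu] by [].
  rewrite hP Phi_X mcoeffX eqxx mulr1 big1_seq ?addr0 //.
  move=> nu /andP[h1 h2]; rewrite mcoeffZ hP Phi_X mcoeffX.
  have -> : (phim a b nu == phim a b mu) = false.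
    apply/negbTE; apply: contra hn => e; apply/hasP; exists nu => //; by rewrite h1.
  by rewrite mulr0.
move: hmu; rewrite mcoeff_msupp => hmu; rewrite hf mcoeff0 => e; by rewrite -e eqxx in hmu.

Qed.

End PbinSec.
Lemma pick_c n (F : 'I_n -> nat) d : (d <= \sum_(l < n) F l)%N ->
  exists c : 'I_n -> nat, (forall l, c l <= F l)%N /\ (\sum_(l < n) c l)%N = d.
Proof.
elim: d => [|d IH] h.
  by exists (fun _ => 0%N); split => //; rewrite big1.
case: IH; first lia.
move=> c [hc hs].
case: (boolP [exists l, c l < F l]%N) => [/existsP [l hl]|hn].
  exists (fun i => c i + (i == l))%N; split.
    move=> i; case: (eqVneq i l) => [->|hil]; last by rewrite addn0.
    by rewrite addn1.
  rewrite big_split /= hs (bigD1 l) //= eqxx big1 => [|i /negbTE -> //].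
  by rewrite addn0 addn1.
exfalso.
have : (\sum_(l < n) F l <= \sum_(l < n) c l)%N.
  apply: leq_sum => i _; move: hn; rewrite negb_exists => /forallP /(_ i).
  by rewrite -leqNgt.
lia.
Qed.

Lemma sum_lt n (F G : 'I_n -> nat) l0 : (forall l, F l <= G l)%N -> (F l0 < G l0)%N ->
  (\sum_(l < n) F l < \sum_(l < n) G l)%N.
Proof.
move=> hle hlt; rewrite (bigD1 l0) // [X in (_ < X)%N](bigD1 l0) //=.
have : (\sum_(i < n | i != l0) F i <= \sum_(i < n | i != l0) G i)%N.
  by apply: leq_sum => i _.
move=> h; rewrite -addSn; exact: leq_add.
Qed.

Section Main.
Variables (K : fieldType) (m : nat) (a b : 'I_m -> nat).

Lemma xw_monE e k : (k < nS m)%N ->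
  xw_mon m e (inord k) = if (m <= k)%N then e (k - m)%N else 0%N.
Proof. by move=> hk; rewrite /xw_mon mnmE inordK. Qed.

Lemma cf_xw e k : (k < nS m)%N ->
  cf (xw_mon m e) k = if (m <= k)%N then e (k - m)%N else 0%N.
Proof. exact: xw_monE. Qed.

Lemma xdeg_xw e : xdeg (xw_mon m e) = (\sum_(l < m) e l + e m)%N.
Proof.
rewrite /xdeg cf_xw ?leq_addr ?addKn; last by rewrite /nS.
congr (_ + _)%N; apply: eq_bigr => l _.
rewrite cf_xw ?leq_addr ?addKn //; rewrite /nS; have := ltn_ord l; lia.
Qed.

Lemma lep_cf (u v : 'X_{1..nS m}) :
  (forall k, (k < nS m)%N -> cf u k <= cf v k)%N -> (u <= v)%MM.
Proof.
move=> h; apply/mnm_lepP => i; rewrite -(inord_val i); exact: h.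
Qed.

Lemma tau_lt_W (u v : 'X_{1..nS m}) : (cf u (m + m) < cf v (m + m))%N -> tau_lt u v.
Proof.
move=> h; rewrite tau_ltE; exists 0%N; split => //.
Qed.

Lemma tau_lt_X (u v : 'X_{1..nS m}) l0 : (l0 < m)%N ->
  cf u (m + m) = cf v (m + m) ->
  (forall l, (l0 < l < m)%N -> cf u (m + l) = cf v (m + l)) ->
  (cf u (m + l0) < cf v (m + l0))%N -> tau_lt u v.
Proof.
move=> hl0 hW hX hlt; rewrite tau_ltE; exists (m - l0)%N; split; first lia.
  move=> j hj; rewrite /key nth_tau; last lia.
  case: eqP => [_|hj0]; first exact: hW.
  have -> : (j <= m)%N by lia.
  have -> : (m + m - j = m + (m - j))%N by lia.
  apply: hX; lia.
rewrite /key nth_tau; last lia.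
have -> : (m - l0 == 0)%N = false by lia.
have -> : (m - l0 <= m)%N by lia.
by have -> : (m + m - (m - l0) = m + l0)%N by lia.
Qed.

Lemma tau_cases (u v : 'X_{1..nS m}) : tau_lt u v ->
  [\/ (cf u (m + m) < cf v (m + m))%N,
      exists l0, [/\ (l0 < m)%N, cf u (m + m) = cf v (m + m),
         (forall l, (l0 < l < m)%N -> cf u (m + l) = cf v (m + l)) &
         (cf u (m + l0) < cf v (m + l0))%N]
    | [/\ (forall l, (l < m)%N -> cf u (m + l) = cf v (m + l)),
          cf u (m + m) = cf v (m + m) &
          exists2 t, (t < m)%N & (cf u t < cf v t)%N]].
Proof.
rewrite tau_ltE => -[k [hk hpre hlt]].
move: hlt; rewrite /key nth_tau //.
case: eqP => [_ h|hk0]; first by constructor 1.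
have hW : cf u (m + m) = cf v (m + m).
  by have := hpre 0%N; rewrite /key nth_tau //; apply; lia.
case: ifP => hkm h.
  constructor 2; exists (m - k)%N; split => //; first lia.
    move=> l hl; have := hpre (m - l)%N; rewrite /key nth_tau; last lia.
    have -> : (m - l == 0)%N = false by lia.
    have -> : (m - l <= m)%N by lia.
    have -> : (m + m - (m - l) = m + l)%N by lia.
    apply; lia.
  by have -> : (m + (m - k) = m + m - k)%N by lia.
constructor 3; split => //.
  move=> l hl; have := hpre (m - l)%N; rewrite /key nth_tau; last lia.
  have -> : (m - l == 0)%N = false by lia.
  have -> : (m - l <= m)%N by lia.
  have -> : (m + m - (m - l) = m + l)%N by lia.
  apply; lia.
exists (k - m - 1)%N => //; lia.
Qed.

End Main.
Section E.
Variables (K : fieldType) (m : nat) (a b : 'I_m -> nat).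

Lemma cfW d k : (k < nS m)%N -> cf (Wpow m d) k = if (k == m + m)%N then d else 0%N.
Proof.
move=> hk; rewrite /Wpow cf_xw //; rewrite /nS in hk.
case: ifP => h; [case: eqP => e1; case: eqP => e2|case: eqP => e2];
  rewrite ?mul1n ?mul0n //; lia.
Qed.

Lemma cfXp (c : 'I_m -> nat) k : (k < nS m)%N ->
  cf (Xpow c) k = if (m <= k)%N then ext c (k - m) else 0%N.
Proof. by move=> hk; rewrite /Xpow cf_xw. Qed.

Lemma cfXv i k : (k < nS m)%N ->
  cf (Xvar m i) k = if (m <= k)%N && (k - m == i.-1)%N then 1%N else 0%N.
Proof. by move=> hk; rewrite /Xvar cf_xw //; case: ifP => //= _; case: eqP. Qed.

Lemma psiW d k : (k < m)%N -> psi_mon a b (Wpow m d) (inord k) = (ext b k * d)%N.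
Proof.
move=> hk; rewrite psiE; last by rewrite /nS; lia.
rewrite hk !cfW; try (rewrite /nS; lia).
have -> : (k == m + m)%N = false by lia.
have -> : (m + k == m + m)%N = false by lia.
rewrite eqxx; lia.
Qed.

Lemma psiXp (c : 'I_m -> nat) k : (k < m)%N ->
  psi_mon a b (Xpow c) (inord k) = (ext a k * ext c k)%N.
Proof.
move=> hk; rewrite psiE; last by rewrite /nS; lia.
rewrite hk !cfXp; try (rewrite /nS; lia).
rewrite !leq_addr !addKn (ext_ge c (leqnn m)).
have -> : (m <= k)%N = false by lia.
lia.
Qed.

Lemma psiXv i k : (1 <= i <= m)%N -> (k < m)%N ->
  psi_mon a b (Xvar m i) (inord k) = if k == i.-1 then ext a k else 0%N.
Proof.
move=> hi hk; rewrite psiE; last by rewrite /nS; lia.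
rewrite hk !cfXv; try (rewrite /nS; lia).
have -> : (m <= k)%N = false by lia.
have -> : (m <= m + m)%N = true by lia.
have -> : (m + m - m = m)%N by lia.
have -> : (m == i.-1) = false by lia.
rewrite /= leq_addr addKn. case: (k == i.-1); rewrite ?muln1 ?muln0 ?addn0 ?add0n //.
Qed.

Lemma xdegW d : xdeg (Wpow m d) = d.
Proof.
rewrite /Wpow xdeg_xw big1 => [|l _]; first by rewrite eqxx; lia.
have -> : (nat_of_ord l == m) = false by have := ltn_ord l; lia.
by [].
Qed.

Lemma xdegXp (c : 'I_m -> nat) : xdeg (Xpow c) = (\sum_(l < m) c l)%N.
Proof.
rewrite /Xpow xdeg_xw ext_ge // addn0; apply: eq_bigr => l _; exact: extO.
Qed.

Lemma xdegXv i : (1 <= i <= m.+1)%N -> xdeg (Xvar m i) = 1%N.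
Proof.
move=> hi; rewrite /Xvar xdeg_xw.
rewrite (eq_bigr (fun l : 'I_m => ((l == i.-1 :> nat) * 1)%N)); last by move=> l _; rewrite muln1.
rewrite (sum_pick _ (fun _ => 1%N)); case: ifP => h; first by have -> : (m == i.-1) = false by lia.
have -> : (m == i.-1) = true by lia. by [].
Qed.

Lemma Gamma_ker g : Gamma0 a b g \/ Gamma1 a b g -> Lker (K := K) a b g.
Proof.
case=> [[i [j [hj hji hi ->]]]|[c [_ ->]]]; apply: Pbin_ker.
  rewrite !xdegXv //; lia.
by rewrite xdegW xdegXp.
Qed.

End E.
Section F.
Variables (K : fieldType) (m : nat) (a b : 'I_m -> nat).

Definition EQS (nu mu : 'X_{1..nS m}) :=
  forall j, (j < m)%N ->
   (cf nu j + ext a j * cf nu (m + j) + ext b j * cf nu (m + m) =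
    cf mu j + ext a j * cf mu (m + j) + ext b j * cf mu (m + m))%N.

Lemma phim_eqs nu mu : phim a b nu = phim a b mu -> EQS nu mu /\ xdeg nu = xdeg mu.
Proof.
move=> e; split.
  move=> j hj; have := congr1 (fun u : 'X_{1..m.+1} => u (inord j)) e.
  have hj1 : (j < m.+1)%N by lia.
  have hj2 : (j < nS m)%N by rewrite /nS; lia.
  by rewrite /= !phimE // hj !psiE // hj.
have := congr1 (fun u : 'X_{1..m.+1} => u (inord m)) e.
by rewrite /= !phimE // ltnn.
Qed.

Lemma caseW nu mu : EQS nu mu -> xdeg nu = xdeg mu ->
  (cf nu (m + m) < cf mu (m + m))%N ->
  exists g nu', [/\ Gamma1 (K := K) a b g, g <> 0, is_lead_mon (@tau_lt m) g nu' & (nu' <= mu)%MM].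
Proof.
move=> heq hdeg hW.
have hsum : (cf mu (m + m) - cf nu (m + m) <= \sum_(l < m) (cf nu (m + l) - cf mu (m + l)))%N.
  have h1 : (\sum_(l < m) cf nu (m + l) <=
             \sum_(l < m) (cf mu (m + l) + (cf nu (m + l) - cf mu (m + l))))%N.
    by apply: leq_sum => l _; lia.
  rewrite big_split /= in h1. move: hdeg; rewrite /xdeg => hd. set S1 := (\sum_(l < m) cf nu (m + l))%N in h1 hd. set S2 := (\sum_(l < m) cf mu (m + l))%N in h1 hd. set S3 := (\sum_(l < m) (cf nu (m + l) - cf mu (m + l)))%N in h1 *. lia.
have [c [hc hcs]] := pick_c hsum.
pose M := Wpow m (\sum_(l < m) c l). pose N := Xpow c.
have hmm : (m + m < nS m)%N by rewrite /nS.
have hlt : tau_lt (TA a b N M + N)%MM (TA a b M N + M)%MM.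
  apply: tau_lt_W; rewrite /cf !mnmDE !TAE // -!/(cf _ _) /M /N cfW // cfXp //.
  have -> : (m + m < m)%N = false by lia.
  rewrite eqxx leq_addr addKn ext_ge //; lia.
have [hg0 hlead] := Pbin_lead K hlt.
exists (Pbin K a b M N), (TA a b M N + M)%MM; split => //.
  exists c; split => //.
  case: (boolP [exists i, c i != 0%N]) => [/existsP //|hn].
  exfalso; move: hcs; rewrite big1; first lia.
  move=> i _; move: hn; rewrite negb_exists => /forallP /(_ i).
  by rewrite negbK => /eqP.
apply: lep_cf => k hk; rewrite /cf mnmDE TAE // -!/(cf _ _).
case: ifP => hkm.
  rewrite /cf /M /N psiW // psiXp // -[Wpow m _ (inord k)]/(cf (Wpow m _) k) cfW // -[mu (inord k)]/(cf mu k).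
  have -> : (k == m + m)%N = false by lia.
  pose ko := Ordinal hkm.
  have hck : (c ko <= cf nu (m + k) - cf mu (m + k))%N by exact: hc ko.
  have -> : ext c k = c ko by exact: (extO c ko).
  have p1 : (ext a k * c ko <= ext a k * (cf nu (m + k) - cf mu (m + k)))%N.
    exact: leq_mul.
  have p2 := mulnBr (ext a k) (cf nu (m + k)) (cf mu (m + k)).
  have := heq k hkm.
  lia.
rewrite /M cfW //.
case: eqP => e; last lia.
subst k; rewrite hcs; lia.
Qed.

End F.
Section G.
Variables (K : fieldType) (m : nat) (a b : 'I_m -> nat).

Lemma cfTA_hi M N (X : 'X_{1..nS m}) k : (m <= k)%N -> (k < nS m)%N ->
  cf (TA a b M N + X)%MM k = cf X k.
Proof.
move=> h1 h2; rewrite /cf mnmDE TAE //.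
by have -> : (k < m)%N = false by lia.
Qed.

Lemma caseX nu mu l0 : EQS a b nu mu -> xdeg nu = xdeg mu -> (l0 < m)%N ->
  cf nu (m + m) = cf mu (m + m) ->
  (forall l, (l0 < l < m)%N -> cf nu (m + l) = cf mu (m + l)) ->
  (cf nu (m + l0) < cf mu (m + l0))%N ->
  exists g nu', [/\ Gamma0 (K := K) a b g, g <> 0, is_lead_mon (@tau_lt m) g nu' & (nu' <= mu)%MM].
Proof.
move=> heq hdeg hl0 hW hX hlt0.
have [j0 hj0 hjlt] : exists2 j0, (j0 < l0)%N & (cf mu (m + j0) < cf nu (m + j0))%N.
  case: (boolP [exists l : 'I_m, (l < l0)%N && (cf mu (m + l) < cf nu (m + l))%N]).
    by case/existsP => l /andP[h1 h2]; exists (nat_of_ord l).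
  move=> hn; exfalso.
  have hs : (\sum_(l < m) cf nu (m + l) < \sum_(l < m) cf mu (m + l))%N.
    apply: (@sum_lt _ _ _ (Ordinal hl0)) => //= l.
    case: (ltngtP l l0) => hll.
    - move: hn; rewrite negb_exists => /forallP /(_ l).
      by rewrite hll /= -leqNgt.
    - by rewrite hX //; have := ltn_ord l; lia.
    - by rewrite hll; exact: ltnW.
  move: hdeg; rewrite /xdeg hW.
  set S1 := (\sum_(l < m) cf nu (m + l))%N in hs *.
  set S2 := (\sum_(l < m) cf mu (m + l))%N in hs *.
  lia.
pose M := Xvar m l0.+1. pose N := Xvar m j0.+1.
have hmm : (m + m < nS m)%N by rewrite /nS.
have hlt : tau_lt (TA a b N M + N)%MM (TA a b M N + M)%MM.
  apply: (@tau_lt_X _ _ _ l0) => //.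
  - rewrite !cfTA_hi ?leq_addr // /M /N !cfXv // leq_addr addKn /=.
    have -> : (m == l0) = false by lia.
    by have -> : (m == j0) = false by lia.
  - move=> l hl.
    have hl2 : (m + l < nS m)%N by rewrite /nS; lia.
    rewrite !cfTA_hi ?leq_addr // /M /N !cfXv // leq_addr addKn /=.
    have -> : (l == l0) = false by lia.
    by have -> : (l == j0) = false by lia.
  - have hl2 : (m + l0 < nS m)%N by rewrite /nS; lia.
    rewrite !cfTA_hi ?leq_addr // /M /N !cfXv // leq_addr addKn /= eqxx.
    by have -> : (l0 == j0) = false by lia.
have [hg0 hlead] := Pbin_lead K hlt.
exists (Pbin K a b M N), (TA a b M N + M)%MM; split => //.
  exists l0.+1, j0.+1; split => //; lia.
apply: lep_cf => k hk.
case: (ltnP k m) => hkm.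
  rewrite /cf mnmDE TAE // hkm /N psiXv //; last lia.
  rewrite -[M (inord k)]/(cf M k) /M cfXv //.
  have -> : (m <= k)%N = false by lia.
  rewrite /= addn0 -[mu (inord k)]/(cf mu k).
  case: eqP => e; last lia.
  subst k.
  have := heq j0 hkm.
  have p1 : (ext a j0 * (cf mu (m + j0)).+1 <= ext a j0 * cf nu (m + j0))%N.
    exact: leq_mul.
  rewrite mulnS in p1.
  rewrite hW; lia.
rewrite cfTA_hi // /M cfXv // hkm /=.
case: eqP => e; last lia.
have -> : k = (m + l0)%N by lia.
lia.
Qed.

Lemma caseT nu mu : EQS a b nu mu ->
  (forall l, (l < m)%N -> cf nu (m + l) = cf mu (m + l)) ->
  cf nu (m + m) = cf mu (m + m) ->
  forall t, (t < m)%N -> (cf nu t < cf mu t)%N -> False.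
Proof.
move=> heq hX hW t ht hlt.
have := heq t ht; rewrite hX // hW; lia.
Qed.

End G.

Theorem proposition2p1 (K : fieldType) (m : nat) (a b : 'I_m -> nat) :
  (3 <= m)%N ->
  (forall i, (b i < a i)%N) ->
  (exists i j : 'I_m, [/\ i != j, b i != 0%N & b j != 0%N]) ->
  is_groebner (@tau_lt m)
    (fun g => Gamma0 (K := K) a b g \/ Gamma1 (K := K) a b g)
    (Lker (K := K) a b).
Proof.
move=> _ _ _; split; first exact: Gamma_ker.
move=> f hf hf0.
have hs : msupp f <> [::].
  by move=> e; apply: hf0; apply/eqP; rewrite -msupp_eq0 e.
have [mu hmu hmax] := exists_max hs.
have hlead : is_lead_mon (@tau_lt m) f mu by split.
have [nu hnu [hne hph]] := ker_pair hf hmu.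
have hlt : tau_lt nu mu by apply: hmax => //; apply/eqP.
have [heq hdeg] := phim_eqs hph.
case: (tau_cases hlt).
- move=> hW; have [g [nu' [hg hg0 hl hd]]] := caseW K heq hdeg hW.
  by exists g, mu, nu'; split => //; right.
- move=> [l0 [hl0 hW hX hlt0]].
  have [g [nu' [hg hg0 hl hd]]] := caseX K heq hdeg hl0 hW hX hlt0.
  by exists g, mu, nu'; split => //; left.
- move=> [hX hW [t ht htl]]; exfalso; exact: (caseT heq hX hW ht htl).
Qed.
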